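(* Let $H$ be an acyclic simple digraph, let $k$ be a positive integer, and let $T$ be a tournament that does not contain $k$ pairwise vertex-disjoint topological minor copies of $H$. Then there is a set $X$ of at most $2^{|V(H)|}k$ vertices of $T$ such that $T-X$ does not contain $H$ as a topological minor.
   Context: A tournament is a simple digraph with exactly one arc between every pair of distinct vertices. A topological minor copy of $H$ in a digraph $G$ is a subgraph $\widehat H$ of $G$ with a map sending vertices of $H$ to distinct vertices of $\widehat H$ and arcs $(u,v)$ of $H$ to directed paths from the image of $u$ to the image of $v$ that are internally vertex-disjoint, contain no image of a vertex of $H$ as an internal vertex, and together cover every arc and every non-image vertex of $\widehat H$ exactly once; $G$ contains $H$ as a topological minor if it has such a subgraph. $T-X$ is the subtournament induced by $V(T)\setminus X$. *)

(* Defs.v *)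
From mathcomp Require Import all_boot.
Set Implicit Arguments. Unset Strict Implicit. Unset Printing Implicit Defensive.

(* A simple digraph: no loops (parallel arcs are impossible for a relation). *)
Definition simple_digraph (V : finType) (E : rel V) : Prop :=
  forall x, ~~ E x x.

Definition acyclic (V : finType) (E : rel V) : Prop :=
  forall x y, E x y -> ~~ connect E y x.

Definition tournament (V : finType) (E : rel V) : Prop :=
  (forall x, ~~ E x x) /\
  (forall x y, x != y -> (E x y || E y x) /\ ~~ (E x y && E y x)).

(* A topological-minor model of H = (VH, EH) in G = (V, E):
   phi maps vertices of H injectively to branch vertices of G, and for every
   arc (u,v) of H, P u v is the sequence of internal vertices of a directed
   path phi u -> ... -> phi v in G. *)
Definition is_topminor_model (VH V : finType) (EH : rel VH) (E : rel V)
  (phi : VH -> V) (P : VH -> VH -> seq V) : Prop :=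
  [/\ injective phi,
      (forall u v, EH u v ->
         path E (phi u) (rcons (P u v) (phi v)) /\
         uniq (phi u :: rcons (P u v) (phi v))),
      (forall u v w, EH u v -> phi w \notin P u v) &
      (forall u v u' v', EH u v -> EH u' v' -> (u, v) != (u', v') ->
         forall x, x \in P u v -> x \notin P u' v')].

Definition tm_vset (VH V : finType) (EH : rel VH)
  (phi : VH -> V) (P : VH -> VH -> seq V) : {set V} :=
  [set x | [exists w, phi w == x] ||
           [exists u, [exists v, EH u v && (x \in P u v)]]].

Definition contains_topminor_in (VH V : finType) (EH : rel VH) (E : rel V)
  (S : {set V}) : Prop :=
  exists (phi : VH -> V) (P : VH -> VH -> seq V),
    is_topminor_model EH E phi P /\ tm_vset EH phi P \subset S.

Definition contains_k_disjoint_topminors (VH V : finType) (EH : rel VH)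
  (E : rel V) (k : nat) : Prop :=
  exists (phi : 'I_k -> VH -> V) (P : 'I_k -> VH -> VH -> seq V),
    (forall i, is_topminor_model EH E (phi i) (P i)) /\
    (forall i j, i != j -> [disjoint tm_vset EH (phi i) (P i) & tm_vset EH (phi j) (P j)]).

(* Main.v *)
Require Import Defs.
From mathcomp Require Import all_boot zify.

Lemma source (VH : finType) (EH : rel VH) (A : {set VH}) :
  acyclic EH -> A != set0 -> exists2 a, a \in A & forall u, u \in A -> ~~ EH u a.
Proof.
move=> ac /set0Pn [a0 Ha0].
case: (arg_minnP (fun a => #|[set u | connect EH u a]|) Ha0) => a Ha Hmin.
exists a => // u Hu; apply/negP => Hua.
have := Hmin u Hu; rewrite leqNgt => /negP; apply.
apply: proper_card; apply/properP; split.
  apply/subsetP => w; rewrite !inE => Hw.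
  by apply: connect_trans Hw (connect1 Hua).
exists a; first by rewrite inE connect0.
by rewrite inE; apply: ac.
Qed.

Lemma sink (VH : finType) (EH : rel VH) (A : {set VH}) :
  acyclic EH -> A != set0 -> exists2 a, a \in A & forall u, u \in A -> ~~ EH a u.
Proof.
move=> ac /set0Pn [a0 Ha0].
case: (arg_minnP (fun a => #|[set u | connect EH a u]|) Ha0) => a Ha Hmin.
exists a => // u Hu; apply/negP => Hua.
have := Hmin u Hu; rewrite leqNgt => /negP; apply.
apply: proper_card; apply/properP; split.
  apply/subsetP => w; rewrite !inE => Hw.
  by apply: connect_trans (connect1 Hua) Hw.
exists a; first by rewrite inE connect0.
by rewrite inE; apply: ac.
Qed.

Lemma embed (VH : finType) (EH : rel VH) (VT : finType) (ET : rel VT) (x0 : VT) :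
  acyclic EH -> tournament ET ->
  forall m (A : {set VH}) (S : {set VT}), #|A| = m -> 2 ^ m <= #|S| ->
  exists phi : VH -> VT, [/\ ({in A &, injective phi}),
     (forall u, u \in A -> phi u \in S) &
     (forall u v, u \in A -> v \in A -> EH u v -> ET (phi u) (phi v))].
Proof.
move=> ac [loop tour]; elim=> [|m IH] A S HA HS.
  exists (fun _ => x0); move/eqP: HA; rewrite cards_eq0 => /eqP ->.
  by split=> [u v|u|u v]; rewrite inE.
have /set0Pn [x Hx] : S != set0 by rewrite -card_gt0; apply: leq_trans HS; rewrite expn_gt0.
set Sp := [set y in S | ET x y]; set Sm := [set y in S | ET y x].
have Hsub : S :\ x \subset Sp :|: Sm.
  apply/subsetP => y; rewrite !inE => /andP [Hyx Hy].
  by case: (tour _ _ Hyx) => /orP [] ->; rewrite Hy ?orbT.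
have Hc : #|S| - 1 <= #|Sp| + #|Sm|.
  apply: leq_trans (leq_card_setU Sp Sm); apply: leq_trans (subset_leq_card Hsub).
  by rewrite (cardsD1 x S) Hx; lia.
have HA0 : A != set0 by rewrite -card_gt0 HA.
have [HSp|HSm] : 2 ^ m <= #|Sp| \/ 2 ^ m <= #|Sm|.
  by move: HS; rewrite expnS; lia.
- have [a Ha Hsrc] := @source _ _ _ ac HA0.
  have HA' : #|A :\ a| = m by move: HA; rewrite (cardsD1 a A) Ha; lia.
  have [phi [Hinj HS' Harc]] := IH _ _ HA' HSp.
  exists (fun u => if u == a then x else phi u); split.
  + move=> u v Hu Hv /=.
    case: eqP => [->|/eqP Hua]; case: eqP => [->|/eqP Hva] //.
    * move=> Hx'; have := HS' v; rewrite !inE Hva Hv => /(_ isT).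
      by rewrite -Hx' => /andP [_ /negP]; rewrite /= (negbTE (loop _)).
    * move=> Hx'; have := HS' u; rewrite !inE Hua Hu => /(_ isT).
      by rewrite Hx' => /andP [_ /negP]; rewrite /= (negbTE (loop _)).
    * by apply: (Hinj u v); rewrite !inE ?Hua ?Hva ?Hu ?Hv.
  + move=> u Hu; case: eqP => // /eqP Hua.
    by have := HS' u; rewrite !inE Hua Hu => /(_ isT) /andP [].
  + move=> u v Hu Hv Huv.
    have Hva : v != a by apply/eqP => Ev; move: Huv; rewrite Ev; apply/negP; apply: Hsrc.
    rewrite (negbTE Hva); case: (eqVneq u a) => [Eu|Hua]; first subst u.
    * by have := HS' v; rewrite !inE Hva Hv => /(_ isT) /andP [].
    * by apply: Harc; rewrite // !inE ?Hua ?Hva ?Hu ?Hv.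
- have [a Ha Hsnk] := @sink _ _ _ ac HA0.
  have HA' : #|A :\ a| = m by move: HA; rewrite (cardsD1 a A) Ha; lia.
  have [phi [Hinj HS' Harc]] := IH _ _ HA' HSm.
  exists (fun u => if u == a then x else phi u); split.
  + move=> u v Hu Hv /=.
    case: eqP => [->|/eqP Hua]; case: eqP => [->|/eqP Hva] //.
    * move=> Hx'; have := HS' v; rewrite !inE Hva Hv => /(_ isT).
      by rewrite -Hx' => /andP [_ /negP]; rewrite /= (negbTE (loop _)).
    * move=> Hx'; have := HS' u; rewrite !inE Hua Hu => /(_ isT).
      by rewrite Hx' => /andP [_ /negP]; rewrite /= (negbTE (loop _)).
    * by apply: (Hinj u v); rewrite !inE ?Hua ?Hva ?Hu ?Hv.
  + move=> u Hu; case: eqP => // /eqP Hua.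
    by have := HS' u; rewrite !inE Hua Hu => /(_ isT) /andP [].
  + move=> u v Hu Hv Huv.
    have Hua : u != a by apply/eqP => Ev; move: Huv; rewrite Ev; apply/negP; apply: Hsnk.
    rewrite (negbTE Hua); case: (eqVneq v a) => [Ev|Hva]; first subst v.
    * by have := HS' u; rewrite !inE Hua Hu => /(_ isT) /andP [].
    * by apply: Harc; rewrite // !inE ?Hua ?Hva ?Hu ?Hv.
Qed.

Lemma copies (VH : finType) (EH : rel VH) (VT : finType) (ET : rel VT) (x0 : VT) :
  acyclic EH -> tournament ET ->
  forall k (S : {set VT}), 2 ^ #|VH| * k <= #|S| ->
  exists phi : nat -> VH -> VT,
    [/\ (forall i, i < k -> injective (phi i) /\
           forall u v, EH u v -> ET (phi i u) (phi i v)),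
        (forall i u, i < k -> phi i u \in S) &
        (forall i j u v, i < k -> j < k -> i != j -> phi i u != phi j v)].
Proof.
move=> ac tour; elim=> [|k IH] S HS.
  by exists (fun _ _ => x0); split.
have HS0 : 2 ^ #|VH| <= #|S| by apply: leq_trans HS; rewrite leq_pmulr.
have [phi0 [Hinj0 HS0' Harc0]] := @embed _ _ _ _ x0 ac tour #|VH| setT S (cardsT _) HS0.
set B := [set phi0 u | u in VH].
have HB : #|B| <= #|VH| by apply: leq_imset_card.
have Hn : #|VH| <= 2 ^ #|VH| by apply: ltnW; apply: ltn_expl.
have HS' : 2 ^ #|VH| * k <= #|S :\: B|.
  rewrite cardsD.
  have : #|S :&: B| <= #|B| by apply: subset_leq_card; apply: subsetIr.
  move: HS; rewrite mulnS; lia.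
have [phi [Hc HSS Hdis]] := IH _ HS'.
exists (fun i => if i == k then phi0 else phi i); split.
- move=> i Hi; case: eqP => [_|/eqP Hik].
    split; first by move=> u v; apply: Hinj0; rewrite inE.
    by move=> u v; apply: Harc0; rewrite inE.
  by apply: Hc; rewrite ltn_neqAle Hik -ltnS.
- move=> i u Hi; case: eqP => [_|/eqP Hik]; first by apply: HS0'; rewrite inE.
  have := HSS i u; rewrite ltn_neqAle Hik -ltnS Hi => /(_ isT).
  by rewrite inE => /andP [].
- move=> i j u v Hi Hj Hij.
  case: (eqVneq i k) => [Ei|Hik]; case: (eqVneq j k) => [Ej|Hjk].
  + by move: Hij; rewrite Ei Ej eqxx.
  + have := HSS j v; rewrite ltn_neqAle Hjk -ltnS Hj => /(_ isT).
    rewrite !inE => /andP [Hv _]; apply/eqP => E; move: Hv.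
    by rewrite -E imset_f.
  + have := HSS i u; rewrite ltn_neqAle Hik -ltnS Hi => /(_ isT).
    rewrite !inE => /andP [Hu _]; apply/eqP => E; move: Hu.
    by rewrite E imset_f.
  + by apply: Hdis; rewrite // ltn_neqAle ?Hik ?Hjk -ltnS.
Qed.

Lemma model_nil (VH : finType) (EH : rel VH) (VT : finType) (ET : rel VT)
  (phi : VH -> VT) :
  simple_digraph EH -> injective phi -> (forall u v, EH u v -> ET (phi u) (phi v)) ->
  is_topminor_model EH ET phi (fun _ _ => [::]).
Proof.
move=> simp inj arc; split => //.
move=> u v Huv /=; rewrite arc //; split => //.
rewrite inE andbT; apply/eqP => /inj E; move: Huv; rewrite E.
by move/negP: (simp v).
Qed.

Lemma vset_nil (VH : finType) (EH : rel VH) (VT : finType) (phi : VH -> VT) x :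
  (x \in tm_vset EH phi (fun _ _ => [::])) = [exists w, phi w == x].
Proof.
rewrite inE; case: [exists w, _] => //=.
by apply/negbTE/existsP => -[u /existsP [v /andP [_]]].
Qed.

Theorem corollary20 (VH : finType) (EH : rel VH) (VT : finType) (ET : rel VT)
  (k : nat) :
  simple_digraph EH -> acyclic EH -> 0 < k -> tournament ET ->
  ~ contains_k_disjoint_topminors EH ET k ->
  exists X : {set VT},
    #|X| <= 2 ^ #|VH| * k /\ ~ contains_topminor_in EH ET (~: X).
Proof.
move=> simp ac kpos tour Hno.
case: (leqP (2 ^ #|VH| * k) #|VT|) => H.
  exfalso.
  have : 0 < #|[set: VT]| by rewrite cardsT; apply: leq_trans H; rewrite muln_gt0 expn_gt0 kpos.
  rewrite card_gt0 => /set0Pn [x0 _].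
  have [phi [Hc HS Hdis]] := @copies _ _ _ _ x0 ac tour k setT ltac:(by rewrite cardsT).
  apply: Hno; exists (fun i : 'I_k => phi i), (fun _ _ _ => [::]); split.
    by move=> i; have [Hi Ha] := Hc i (ltn_ord i); apply: model_nil.
  move=> i j Hij; rewrite disjoint_subset; apply/subsetP => x.
  move=> Hx; rewrite inE; move: Hx; rewrite (@vset_nil _ EH _ (phi i) x) (@vset_nil _ EH _ (phi j) x) => /existsP [u /eqP Eu]; apply/negP => /existsP [v /eqP E].
  by move: (Hdis i j u v (ltn_ord i) (ltn_ord j) Hij); rewrite E -Eu eqxx.
exists setT; split; first by rewrite cardsT ltnW.
move=> [phi [P [Hm Hsub]]]; apply: Hno.
exists (fun _ => phi), (fun _ => P); split => // i j _.
rewrite disjoint_subset; apply/subsetP => x Hx; move/subsetP: Hsub => /(_ x Hx).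
by rewrite setCT inE.
Qed.
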